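(* Every ordered graph $F$ on $k$ vertices that does not contain a monotone path of length two satisfies $\rho_{<}(F)\le\rho_{<}(H_k)$.
   Context: An ordered graph is a graph with a totally ordered vertex set. An ordered graph $G$ contains $F$ if there is an injective order-preserving map $V(F)\to V(G)$ sending edges to edges; otherwise $G$ is $F$-free. $\rho_{<}(F,G)=\max\{e(G')/e(G): G'\subseteq G,\ G'\ F\text{-free}\}$ and $\rho_{<}(F)=\inf_G\rho_{<}(F,G)$ over all ordered graphs $G$. A monotone path of length two consists of vertices $u<v<w$ with $uv,vw$ edges. $H_k$ is the ordered graph on $[k]\times\{0,1\}$, ordered lexicographically, with edge set $\{(x,0)(y,1): x\le y\}$. *)

(* Defs.v *)
From mathcomp Require Import all_boot all_order all_algebra.
From mathcomp Require Import classical_sets reals.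
Set Implicit Arguments. Unset Strict Implicit. Unset Printing Implicit Defensive.
Import Order.TTheory GRing.Theory Num.Theory.

(* An ordered graph: vertex set 'I_n with its natural order.  Every ordered
   graph is isomorphic (as an ordered graph) to exactly one of these.
   The edge {u,v} with u < v is stored as the pair (u,v); pairs (u,v) with
   ~ (u < v) in [oraw] are ignored. *)
Record ograph := OGraph { nv : nat; oraw : {set 'I_nv * 'I_nv} }.

Definition edges (G : ograph) : {set 'I_(nv G) * 'I_(nv G)} :=
  [set p in oraw G | (p.1 < p.2)%N].

Definition ne (G : ograph) : nat := #|edges G|.

Definition contains (F : ograph) (n : nat) (S : {set 'I_n})
    (E : {set 'I_n * 'I_n}) : bool :=
  [exists f : {ffun 'I_(nv F) -> 'I_n},
    [&& [forall i : 'I_(nv F), forall j : 'I_(nv F), (i < j)%N ==> (f i < f j)%N],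
        [forall i, f i \in S] &
        [forall p in edges F, (f p.1, f p.2) \in E]]].

Definition is_subgraph (G : ograph) (S : {set 'I_(nv G)})
    (E : {set 'I_(nv G) * 'I_(nv G)}) : bool :=
  (E \subset edges G) && [forall p in E, (p.1 \in S) && (p.2 \in S)].

(* maximum number of edges of an F-free subgraph of G (0 if none exists) *)
Definition maxfree (F G : ograph) : nat :=
  \max_(S : {set 'I_(nv G)})
    \max_(E : {set 'I_(nv G) * 'I_(nv G)} |
            is_subgraph S E && ~~ contains F S E) #|E|.

(* rho_<(F,G) = max e(G')/e(G), for G with at least one edge *)
Definition rho_FG (R : realType) (F G : ograph) : R :=
  ((maxfree F G)%:R / (ne G)%:R)%R.

Definition rho (R : realType) (F : ograph) : R :=
  inf [set rho_FG R F G | G in [set G : ograph | (0 < ne G)%N]].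

Definition has_mpath2 (F : ograph) : Prop :=
  exists u v w : 'I_(nv F),
    (u, v) \in edges F /\ (v, w) \in edges F.

(* H_k on [k] x {0,1} (lex order), encoded via the order isomorphism
   (x, b) |-> 2x + b onto 'I_(2k) (x 0-based): edge (x,0)(y,1) iff x <= y. *)
Definition H (k : nat) : ograph :=
  @OGraph (k.*2) [set p : 'I_(k.*2) * 'I_(k.*2) |
     [&& ~~ odd p.1, odd p.2 & ((p.1)./2 <= (p.2)./2)%N]].

(* Main.v *)
Require Import Defs.
From mathcomp Require Import all_boot all_order all_algebra.
From mathcomp Require Import classical_sets reals.
Import Order.TTheory GRing.Theory Num.Theory.
From mathcomp Require Import zify.

Local Open Scope classical_set_scope.

Section Emb.
Variable F : ograph.
Hypothesis hF : ~ has_mpath2 F.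

Definition isR (i : 'I_(nv F)) : bool := [exists p in edges F, p.2 == i].

Lemma gP (i : 'I_(nv F)) : ((i : nat).*2 + isR i < (nv F).*2)%N.
Proof. have := ltn_ord i; case: (isR i) => /=; lia. Qed.

Definition g (i : 'I_(nv F)) : 'I_(nv (H (nv F))) := Ordinal (gP i).

Lemma contains_mono n (S : {set 'I_n}) E :
  contains (H (nv F)) S E -> contains F S E.
Proof.
case/existsP => f /and3P [/forallP hmono /forallP hS /forallP hE].
apply/existsP; exists [ffun i => f (g i)]; apply/and3P; split.
- apply/forallP => i; apply/forallP => j; apply/implyP => ij; rewrite !ffunE.
  move: (hmono (g i)) => /forallP /(_ (g j)) /implyP; apply => /=.
  by case: (isR i); case: (isR j) => /=; lia.
- by apply/forallP => i; rewrite ffunE.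
- apply/forallP => p; apply/implyP => pE; rewrite !ffunE.
  have Ru : isR p.2 by apply/existsP; exists p; rewrite pE eqxx.
  have Lu : isR p.1 = false.
    apply/negbTE/negP; rewrite /isR => /exists_inP [q qE /eqP q2].
    apply: hF; exists q.1, p.1, p.2; split; last by rewrite -surjective_pairing.
    by rewrite -q2 -surjective_pairing.
  move: (hE (g p.1, g p.2)) => /implyP; apply.
  move: pE; rewrite /edges !inE /= Ru Lu => /andP [_ lt12].
  apply/andP; split; last by rewrite /=; lia.
  rewrite /H /= addn0 addn1 odd_double /= odd_double doubleK uphalf_double /=.
  exact: ltnW.
Qed.

Lemma maxfree_mono G : (maxfree F G <= maxfree (H (nv F)) G)%N.
Proof.
apply/bigmax_leqP => S _; apply/bigmax_leqP => E /andP [sub ncF].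
apply: leq_trans (leq_bigmax S).
apply: leq_bigmax_cond.
rewrite sub /=; apply: contra ncF; exact: contains_mono.
Qed.
End Emb.

Theorem corollary4p2 (R : realType) (F : ograph) :
  ~ has_mpath2 F -> (rho R F <= rho R (H (nv F)))%R.
Proof.
move=> hF.
have le G : (rho_FG R F G <= rho_FG R (H (nv F)) G)%R.
  rewrite /rho_FG; apply: ler_wpM2r; first by rewrite invr_ge0 ler0n.
  by rewrite ler_nat; apply: maxfree_mono.
have ge0 (F' G : ograph) : (0 <= rho_FG R F' G)%R.
  by rewrite /rho_FG divr_ge0 ?ler0n.
have hl : has_lbound [set rho_FG R F G | G in [set G : ograph | (0 < ne G)%N]].
  by exists 0%R => _ [G _ <-]; apply: ge0.
apply: lb_le_inf.
- pose G0 := @OGraph 2 [set (ord0, ord_max)].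
  have : (0 < ne G0)%N.
    rewrite /ne card_gt0; apply/set0Pn; exists (ord0, ord_max).
    by rewrite /edges inE /= inE eqxx.
  by move=> h; exists (rho_FG R (H (nv F)) G0), G0.
- move=> _ [G G0 <-]; apply: le_trans (le G).
  by apply: (ge_inf hl); exists G.
Qed.
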